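(* For all integers $i$ and $k$ such that $k+3\leq i\leq 2k+2$, we have $R_k^{\mathcal{SP}}(i,i)=3i-2k-4$, where $\mathcal{SP}$ is the class of split graphs.
   Context: All graphs are finite and simple. For a graph $G$ and a nonnegative integer $k$, a $k$-sparse $j$-set is a set of $j$ vertices of $G$ inducing a subgraph of maximum degree at most $k$; a $k$-dense $i$-set is a set of $i$ vertices of $G$ that is $k$-sparse in the complement of $G$. For a graph class $\mathcal{G}$, $R_k^{\mathcal{G}}(i,j)$ is the smallest natural number $n$ such that every graph on $n$ vertices in $\mathcal{G}$ has either a $k$-dense $i$-set or a $k$-sparse $j$-set. A split graph is a graph whose vertex set can be partitioned into a clique and an independent set. *)

(* Defs.v *)
From mathcomp Require Import all_boot.
Set Implicit Arguments. Unset Strict Implicit. Unset Printing Implicit Defensive.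

Definition simple_graph (n : nat) (e : rel 'I_n) : Prop :=
  (forall x y, e x y = e y x) /\ (forall x, ~~ e x x).

Definition compl_rel (n : nat) (e : rel 'I_n) : rel 'I_n :=
  fun x y => (x != y) && ~~ e x y.

Definition k_sparse_set (n : nat) (e : rel 'I_n) (k : nat) (S : {set 'I_n}) : bool :=
  [forall x in S, #|[set y in S | e x y]| <= k].

Definition k_sparse_jset n (e : rel 'I_n) k j (S : {set 'I_n}) : bool :=
  (#|S| == j) && k_sparse_set e k S.

Definition k_dense_iset n (e : rel 'I_n) k i (S : {set 'I_n}) : bool :=
  (#|S| == i) && k_sparse_set (compl_rel e) k S.

Definition split_graph (n : nat) (e : rel 'I_n) : Prop :=
  exists C : {set 'I_n},
    (forall x y, x \in C -> y \in C -> x != y -> e x y) /\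
    (forall x y, x \in ~: C -> y \in ~: C -> ~~ e x y).

Definition ramsey_prop_split (k i j n : nat) : Prop :=
  forall e : rel 'I_n, simple_graph e -> split_graph e ->
    (exists S, k_dense_iset e k i S) \/ (exists S, k_sparse_jset e k j S).

Definition is_ramsey_split (k i j r : nat) : Prop :=
  ramsey_prop_split k i j r /\ (forall m, m < r -> ~ ramsey_prop_split k i j m).

(* Main.v *)
Require Import Defs.
From mathcomp Require Import all_boot.
From mathcomp Require Import zify.

Set Implicit Arguments. Unset Strict Implicit. Unset Printing Implicit Defensive.

Lemma subset_of_card (T : finType) (A : {set T}) m :
  m <= #|A| -> exists B : {set T}, B \subset A /\ #|B| = m.
Proof.
move: {2}#|A| (erefl #|A|) => n; elim: n A => [|n IH] A HA Hm.
  by exists A; split => //; lia.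
case: (ltnP m n.+1) => Hmn; last first.
  by exists A; split => //; lia.
have : 0 < #|A| by lia.
case/card_gt0P => x Hx.
have HA' : #|A :\ x| = n by move: HA; rewrite (cardsD1 x A) Hx; lia.
have Hmn' : m <= #|A :\ x| by rewrite HA'; lia.
have [B [HB1 HB2]] := IH (A :\ x) HA' Hmn'.
exists B; split => //; apply: subset_trans HB1 _; exact: subsetDl.
Qed.

Lemma card_interval m lo hi :
  #|[set y : 'I_m | lo <= y < hi]| <= hi - lo.
Proof.
rewrite cardE -(size_map val) -(size_iota lo (hi - lo)).
apply: uniq_leq_size.
  rewrite map_inj_uniq ?enum_uniq //; exact: val_inj.
move=> x /mapP [y]; rewrite mem_enum inE => Hy ->; move: Hy => /andP [Hy1 Hy2].
rewrite mem_iota /=; lia.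
Qed.

Definition matched (s D v w : nat) : bool :=
  ((v < s) && (D <= w < D + s)) || ((s <= v < 2*s) && (D + s <= w)).
Definition gr (s D : nat) (v w : nat) : bool :=
  (v != w) && ((v < D) && (w < D) || matched s D v w || matched s D w v).

Lemma lb_sparse m s D k (S : {set 'I_m}) :
  2 * s <= D -> m <= D + 2 * s -> k + s + 1 = D -> #|S| = D.+1 ->
  k_sparse_set (fun x y : 'I_m => gr s D x y) k S -> False.
Proof.
move=> h1 h2 h3 hS /forallP Hsp.
case: (set0Pn (S :&: [set x : 'I_m | x < 2 * s])) => [[x]|Hn]; last first.
  have sub : S \subset [set y : 'I_m | 2 * s <= y < D + 2 * s].
    apply/subsetP => y Hy; rewrite inE.
    have : ~~ (y \in S :&: [set x : 'I_m | x < 2 * s]).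
      by apply/negP => Hy'; apply: Hn; exists y.
    rewrite !inE Hy /= => Hn'.
    move: (ltn_ord y); lia.
  move: (leq_trans (subset_leq_card sub) (card_interval m (2 * s) (D + 2 * s))); rewrite hS; lia.
rewrite !inE => /andP [xS xlt].
have := Hsp x; rewrite xS /= => Hdeg.
set N := [set y in S | gr s D x y].
set O := [set y : 'I_m | if x < s then D + s <= y < D + 2 * s else D <= y < D + s].
have sub : S \subset x |: (N :|: O).
  apply/subsetP => y Hy; rewrite !inE Hy /=.
  case: (eqVneq y x) => //= Hyx.
  case Hg: (gr s D x y) => //=.
  move: Hg; rewrite /gr /matched; move: (ltn_ord y) => Hym.
  have Hxy : (x != y) by rewrite eq_sym.
  rewrite Hxy /= => Hg.
  case: ifP => Hs; lia.
have HO : #|O| <= s.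
  rewrite /O; case: (x < s).
    by apply: leq_trans (card_interval m (D + s) (D + 2 * s)) _; lia.
  by apply: leq_trans (card_interval m D (D + s)) _; lia.
have H1 : #|x |: (N :|: O)| <= 1 + (#|N| + #|O|).
  rewrite cardsU1; apply: leq_add; first exact: leq_b1.
  rewrite cardsU; exact: leq_subr.
have Hdeg' : #|N| <= k := Hdeg.
clear Hdeg Hsp.
move: (leq_trans (subset_leq_card sub) H1); rewrite hS; lia.
Qed.

Lemma lb_dense m s D k (S : {set 'I_m}) :
  2 * s <= D -> m <= D + 2 * s -> k + s + 1 = D -> #|S| = D.+1 ->
  k_sparse_set (compl_rel (fun x y : 'I_m => gr s D x y)) k S -> False.
Proof.
move=> h1 h2 h3 hS /forallP Hsp.
case: (set0Pn (S :&: [set x : 'I_m | D <= x])) => [[x]|Hn]; last first.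
  have sub : S \subset [set y : 'I_m | 0 <= y < D].
    apply/subsetP => y Hy; rewrite inE.
    have : ~~ (y \in S :&: [set x : 'I_m | D <= x]).
      by apply/negP => Hy'; apply: Hn; exists y.
    rewrite !inE Hy /= => Hn'.
    lia.
  move: (leq_trans (subset_leq_card sub) (card_interval m (0) (D))); rewrite hS; lia.
rewrite !inE => /andP [xS xlt].
have := Hsp x; rewrite xS /= => Hdeg.
set N := [set y in S | compl_rel (fun x y : 'I_m => gr s D x y) x y].
set O := [set y : 'I_m | if x < D + s then 0 <= y < s else s <= y < 2 * s].
have sub : S \subset x |: (N :|: O).
  apply/subsetP => y Hy; rewrite !inE Hy /=.
  case: (eqVneq y x) => //= Hyx.
  rewrite /compl_rel.
  have Hxy : (x != y) by rewrite eq_sym.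
  rewrite Hxy /=.
  case Hg: (gr s D x y) => //=.
  move: Hg; rewrite /gr /matched; move: (ltn_ord y) => Hym.
  rewrite Hxy /= => Hg.
  case: ifP => Hs; lia.
have HO : #|O| <= s.
  rewrite /O; case: (x < D + s).
    by apply: leq_trans (card_interval m 0 s) _; lia.
  by apply: leq_trans (card_interval m s (2 * s)) _; lia.
have H1 : #|x |: (N :|: O)| <= 1 + (#|N| + #|O|).
  rewrite cardsU1; apply: leq_add; first exact: leq_b1.
  rewrite cardsU; exact: leq_subr.
have Hdeg' : #|N| <= k := Hdeg.
clear Hdeg Hsp.
move: (leq_trans (subset_leq_card sub) H1); rewrite hS; lia.
Qed.

Lemma lb_graph m s D :
  2 * s <= D ->
  simple_graph (fun x y : 'I_m => gr s D x y) /\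
  split_graph (fun x y : 'I_m => gr s D x y).
Proof.
move=> h; split.
  split.
    move=> x y; rewrite /gr eq_sym; congr andb.
    by rewrite andbC orbAC.
  by move=> x; rewrite /gr eqxx.
exists [set x : 'I_m | x < D]; split.
  by move=> x y; rewrite !inE /gr => -> -> ->.
move=> x y; rewrite !inE /gr /matched; lia.
Qed.

Lemma card_split (T : finType) (A : {set T}) (p : pred T) :
  #|[set u in A | p u]| + #|[set u in A | ~~ p u]| = #|A|.
Proof.
rewrite -(cardsID [set u | p u] A); congr (_ + _); apply: eq_card => u; rewrite !inE andbC //.
Qed.

Lemma card_sum (T : finType) (A : {set T}) (p : pred T) :
  #|[set u in A | p u]| = \sum_(u in A) (p u : nat).
Proof.
rewrite -sum1_card big_mkcond [RHS]big_mkcond /=.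
apply: eq_bigr => u _; rewrite inE; case: (u \in A); by case: (p u).
Qed.

Lemma ub_indep n (f : rel 'I_n) k i (P : {set 'I_n}) :
  (forall x y, x \in ~: P -> y \in ~: P -> ~~ f x y) -> i <= #|~: P| ->
  exists S : {set 'I_n}, (#|S| == i) && k_sparse_set f k S.
Proof.
move=> Hind Hi; have [B [HB1 HB2]] := subset_of_card Hi.
exists B; rewrite HB2 eqxx /=; apply/forallP => x; apply/implyP => xB.
have -> : [set y in B | f x y] = set0.
  apply/setP => y; rewrite !inE; apply/negP => /andP [yB fxy].
  by move: (Hind x y (subsetP HB1 _ xB) (subsetP HB1 _ yB)); rewrite fxy.
by rewrite cards0.
Qed.

Lemma ub_mixed n (f : rel 'I_n) k i t (P : {set 'I_n}) :
  (forall x, ~~ f x x) ->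
  (forall x y, x \in P -> y \in P -> x != y -> f x y) ->
  (forall x y, x \in ~: P -> y \in ~: P -> ~~ f x y) ->
  n + 2 = i + 2 * t -> k + 1 + t = i -> 2 <= t -> #|P| < i -> #|~: P| <= i ->
  #|[set v in P | #|[set u in ~: P | ~~ f v u]| < t]| + 2 <= 2 * t ->
  exists S : {set 'I_n}, (#|S| == i) && k_sparse_set f k S.
Proof.
move=> Hirr Hcl Hind hn hk ht hP hQ hX.
set Q := ~: P in Hind hQ hX *.
set X := [set v in P | #|[set u in Q | ~~ f v u]| < t] in hX.
have hab : #|P| + #|Q| = n by rewrite cardsC card_ord.
have HXP : X \subset P by apply/subsetP => v; rewrite inE => /andP [].
have hPX : #|P :\: X| + #|X| = #|P|.
  by rewrite -(cardsID X P) (setIidPr HXP) addnC.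
have hc : i - #|Q| <= #|P :\: X| by lia.
have [C' [HC1 HC2]] := subset_of_card hc.
have HC'P : C' \subset P by apply: subset_trans HC1 (subsetDl _ _).
exists (C' :|: Q); apply/andP; split.
  rewrite cardsU HC2.
  have -> : C' :&: Q = set0.
    apply/setP => y; rewrite !inE; apply/negP => /andP [yC].
    by rewrite (subsetP HC'P _ yC).
  rewrite cards0; apply/eqP; lia.
apply/forallP => x; apply/implyP; rewrite inE => /orP [xC | xQ].
- have xP := subsetP HC'P _ xC.
  have xX : x \notin X by move: (subsetP HC1 _ xC); rewrite inE => /andP [].
  have hnd : t <= #|[set u in Q | ~~ f x u]|.
    by move: xX; rewrite inE xP /= -leqNgt.
  have hs : #|[set u in Q | f x u]| + #|[set u in Q | ~~ f x u]| = #|Q| := card_split Q (fun u => f x u).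
  have hsub : [set y in C' :|: Q | f x y] \subset (C' :\ x) :|: [set u in Q | f x u].
    apply/subsetP => y; rewrite !inE => /andP [/orP [yC | yQ] fxy].
      apply/orP; left; rewrite yC andbT; apply/negP => /eqP Hyx; move: fxy; rewrite Hyx.
      by move: (Hirr x) => /negP.
    by rewrite yQ fxy orbT.
  have hcx : #|C'| = 1 + #|C' :\ x| by rewrite (cardsD1 x C') xC.
  apply: leq_trans (subset_leq_card hsub) _.
  rewrite cardsU; apply: leq_trans (leq_subr _ _) _.
  have HC2' : #|C'| = i - #|Q| := HC2.
  clear -HC2' hs hcx hnd hk hn hab hP hQ; lia.
- have hsub : [set y in C' :|: Q | f x y] \subset C'.
    apply/subsetP => y; rewrite !inE => /andP [/orP [yC | yQ] fxy] //.
    have yQ' : y \in Q by rewrite /Q inE.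
    by move: (Hind x y xQ yQ'); rewrite fxy.
  apply: leq_trans (subset_leq_card hsub) _; lia.
Qed.

Lemma double_count n (e : rel 'I_n) (C : {set 'I_n}) t :
  (forall x y, e x y = e y x) -> 1 <= t ->
  #|[set v in C | #|[set u in ~: C | ~~ e v u]| < t]| + 2 <= 2 * t \/
  #|[set u in ~: C | #|[set v in C | e u v]| < t]| + 2 <= 2 * t.
Proof.
move=> Hsym ht.
set X := [set v in C | #|[set u in ~: C | ~~ e v u]| < t].
set Y := [set u in ~: C | #|[set v in C | e u v]| < t].
case: (leqP (#|X| + 2) (2 * t)) => hX; first by left.
case: (leqP (#|Y| + 2) (2 * t)) => hY; first by right.
exfalso.
have hX' : (2 * t).-1 <= #|X| by lia.
have hY' : (2 * t).-1 <= #|Y| by lia.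
have [X' [HX1 HX2]] := subset_of_card hX'.
have [Y' [HY1 HY2]] := subset_of_card hY'.
have Hlow : forall x, x \in X' -> t <= #|[set y in Y' | e x y]|.
  move=> x xX.
  have := subsetP HX1 _ xX; rewrite inE => /andP [xC hnd].
  have hs : #|[set y in Y' | e x y]| + #|[set y in Y' | ~~ e x y]| = #|Y'|
    := card_split Y' (fun y => e x y).
  have hsub : [set y in Y' | ~~ e x y] \subset [set u in ~: C | ~~ e x u].
    apply/subsetP => y; rewrite !inE => /andP [yY ->]; rewrite andbT.
    by move: (subsetP HY1 _ yY); rewrite !inE => /andP [].
  have := subset_leq_card hsub.
  have HY2' : #|Y'| = (2 * t).-1 := HY2.
  lia.
have Hup : forall y, y \in Y' -> #|[set x in X' | e x y]| <= t.-1.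
  move=> y yY.
  have := subsetP HY1 _ yY; rewrite inE => /andP [yC hd].
  have hsub : [set x in X' | e x y] \subset [set v in C | e y v].
    apply/subsetP => x; rewrite !inE => /andP [xX exy]; rewrite Hsym exy andbT.
    by move: (subsetP HX1 _ xX); rewrite !inE => /andP [].
  have := subset_leq_card hsub; lia.
have E1 : \sum_(x in X') t <= \sum_(x in X') #|[set y in Y' | e x y]|.
  by apply: leq_sum => x xX; apply: Hlow.
have E2 : \sum_(y in Y') #|[set x in X' | e x y]| <= \sum_(y in Y') t.-1.
  by apply: leq_sum => y yY; apply: Hup.
have E3 : \sum_(x in X') #|[set y in Y' | e x y]| = \sum_(y in Y') #|[set x in X' | e x y]|.
  under eq_bigr do rewrite card_sum.
  rewrite exchange_big /=.
  by apply: eq_bigr => y _; rewrite card_sum.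
move: E1 E2; rewrite E3 !sum_nat_const HX2 HY2; nia.
Qed.

Theorem theorem6p3 (i k : nat) :
  k + 3 <= i -> i <= 2 * k + 2 ->
  is_ramsey_split k i i (3 * i - 2 * k - 4).
Proof.
move=> hi1 hi2; split.
- move=> e [Hsym Hirr] [C [Hcl Hind]].
  case: (leqP i #|~: C|) => h1.
    by right; apply: (@ub_indep _ _ k _ C).
  case: (leqP i #|C|) => h2.
    left; apply: (@ub_indep _ _ k _ (~: C)).
      move=> x y; rewrite setCK /compl_rel => xC yC.
      by case: (eqVneq x y) => //= hxy; rewrite (Hcl x y xC yC hxy).
    by rewrite setCK.
  case: (@double_count _ _ C (i - k - 1) Hsym ltac:(lia)) => hXY.
    right; apply: (@ub_mixed _ _ k i (i - k - 1) C) => //; lia.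
  left; apply: (@ub_mixed _ _ k i (i - k - 1) (~: C)).
  + by move=> x; rewrite /compl_rel eqxx.
  + move=> x y xC yC hxy; rewrite /compl_rel hxy /=; exact: Hind.
  + move=> x y; rewrite setCK /compl_rel => xC yC.
    case: (eqVneq x y) => //= hxy; by rewrite negbK (Hcl x y xC yC hxy).
  + lia.
  + lia.
  + lia.
  + done.
  + by rewrite setCK; lia.
  + rewrite setCK.
    suff -> : #|[set v in ~: C | #|[set u in C | ~~ compl_rel e v u]| < i - k - 1]|
       = #|[set u in ~: C | #|[set v in C | e u v]| < i - k - 1]| by [].
    apply: eq_card => v; rewrite !inE.
    case vC: (v \in C) => //=.
    congr (_ < _); apply: eq_card => u; rewrite !inE /compl_rel.
    case uC: (u \in C) => //=.
    have -> : v != u by apply/eqP => Hvu; move: vC; rewrite Hvu uC.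
    by rewrite /= negbK.
- move=> m Hm Hprop.
  have h2s : 2 * (i - k - 2) <= i - 1 by lia.
  have [Hs Hsp] := lb_graph m h2s.
  case: (Hprop _ Hs Hsp) => [[S /andP [/eqP HS Hd]] | [S /andP [/eqP HS Hd]]].
    apply: (@lb_dense m (i - k - 2) (i - 1) k S) => //; lia.
  apply: (@lb_sparse m (i - k - 2) (i - 1) k S) => //; lia.
Qed.
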